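(* Let $t$ be a standard tableau with $n$ entries and let $2\le k\le n$ be such that $t\sigma_k$ is also standard and $r_t(k-1)\equiv r_t(k) \pmod p$, so that $[t\sigma_k]=[t]$. Put $T:=[t]$. Then $\sigma_k E_T = E_T\sigma_k$ in $RS_n$.
   Context: $p$ is a prime, $R$ is the localization of $\mathbb Z$ at the prime ideal $(p)$, and $\mathbb F_p=R/pR$. $S_n$ acts on the right on $\{1,\dots,n\}$ and hence on tableaux (a permutation $\sigma$ replaces each entry $i$ by $i\sigma$); products of permutations are read from left to right. For $2\le k\le n$ put $\sigma_k=(k-1,k)$. The Jucys–Murphy elements are $L_1=0$ and $L_k=\sum_{j=1}^{k-1}(j,k)\in\mathbb ZS_n$. Partitions are drawn as Young diagrams in English convention; the node $[i,j]$ lies in row $i$, column $j$. A $\lambda$-tableau is a bijective filling of the nodes of $\lambda$ with $1,\dots,n$; it is standard if entries increase along rows and down columns. The content is $r_t(k)=j-i$ if $k$ occupies node $[i,j]$ of $t$. For a tableau $t$ the Jucys–Murphy idempotent is $E_t:=\prod_{c=-n+1}^{n-1}\prod_{i:\,r_t(i)\neq c}\frac{L_i-c}{r_t(i)-c}\in\mathbb QS_n$; over standard tableaux of all shapes of size $n$ these are pairwise orthogonal idempotents with sum $1$, and $L_kE_t=r_t(k)E_t$. Two standard tableaux $s,t$ with $n$ entries (possibly of different shapes) satisfy $s\sim_p t$ if $r_s(k)\equiv r_t(k)\pmod p$ for all $k$; a tableau class is an equivalence class of standard tableaux for $\sim_p$, and $[t]$ denotes the class of $t$. For a class $T$, $E_T:=\sum_{t\in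 T}E_t$; it is known (Murphy) that $E_T\in RS_n$. *)

(* Defs.v *)
From HB Require Import structures.
From mathcomp Require Import all_boot all_order all_algebra all_fingroup.
Set Implicit Arguments. Unset Strict Implicit. Unset Printing Implicit Defensive.
Import Order.TTheory GRing.Theory Num.Theory.
Local Open Scope ring_scope.

(* Conventions: the points {1,...,n} are represented by 'I_n = {0,...,n-1}
   (point m+1 of the paper is the ordinal m).  Permutations 'S_n multiply
   left to right in mathcomp ((s * t) x = t (s x)), as in the paper. *)

Definition galg (n : nat) := {ffun 'S_n -> rat}.

Definition gbasis n (g : 'S_n) : galg n := [ffun h => (h == g)%:R].
Definition gone n : galg n := gbasis 1%g.
Definition gscale n (a : rat) (x : galg n) : galg n := [ffun g => a * x g].
(* convolution product: (sum a_h h)(sum b_k k) = sum a_h b_k (h k) *)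
Definition gmul n (x y : galg n) : galg n :=
  [ffun g => \sum_(h : 'S_n) x h * y (h^-1 * g)%g].
Definition gprod n (s : seq (galg n)) : galg n := foldr (@gmul n) (gone n) s.

Definition JM n (k : 'I_n) : galg n :=
  \sum_(j : 'I_n | (j < k)%N) gbasis (tperm j k).

(* A tableau with n entries: entry x is placed at node t x = (row, column),
   0-based.  Any Young diagram with n nodes fits into 'I_n * 'I_n. *)
Definition tab (n : nat) := {ffun 'I_n -> 'I_n * 'I_n}.
Definition trow n (t : tab n) (x : 'I_n) : nat := val (t x).1.
Definition tcol n (t : tab n) (x : 'I_n) : nat := val (t x).2.

(* t is a bijective filling of the nodes of a Young diagram (of a partition) *)
Definition is_tableau n (t : tab n) : bool :=
  injectiveb t &&
  [forall x, forall i : 'I_n, forall j : 'I_n,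
     ((i <= trow t x)%N && (j <= tcol t x)%N) ==> [exists y, t y == (i, j)]].

Definition standard n (t : tab n) : bool :=
  is_tableau t &&
  [forall x, forall y,
     ((trow t x == trow t y) && (tcol t y == (tcol t x).+1) ==> (x < y)%N) &&
     ((tcol t x == tcol t y) && (trow t y == (trow t x).+1) ==> (x < y)%N)].

(* right action of S_n: entry i is replaced by i sigma *)
Definition tact n (t : tab n) (s : 'S_n) : tab n := [ffun i => t ((s^-1)%g i)].

Definition content n (t : tab n) (x : 'I_n) : int :=
  (tcol t x)%:Z - (trow t x)%:Z.

Definition psim (p : nat) n (s t : tab n) : bool :=
  [forall x, (content s x == content t x %[mod p%:Z])%Z].

(* E_t = prod_{c=-n+1}^{n-1} prod_{i : r_t(i) <> c} (L_i - c)/(r_t(i) - c) *)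
Definition contents_range (n : nat) : seq int :=
  [seq (m%:Z - (n%:Z - 1)) | m <- iota 0 (n + n).-1].

Definition JMidem n (t : tab n) : galg n :=
  gprod (flatten [seq [seq gscale ((content t i - c)%:~R)^-1
                             (JM i - gscale (c%:~R) (gone n))
                       | i <- enum 'I_n & content t i != c]
                 | c <- contents_range n]).

Definition JMclass (p : nat) n (t : tab n) : galg n :=
  \sum_(s : tab n | standard s && psim p s t) JMidem s.

(* Main.v *)
Require Import Defs.
From HB Require Import structures.
From mathcomp Require Import all_boot all_order all_algebra all_fingroup.
From mathcomp Require Import zify.
Set Implicit Arguments. Unset Strict Implicit. Unset Printing Implicit Defensive.
Import Order.TTheory GRing.Theory Num.Theory.
Local Open Scope ring_scope.

Section Alg.
Variable n : nat.
Implicit Types x y z : galg n.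

Lemma gmulA : associative (@gmul n).
Proof.
move=> x y z; apply/ffunP=> g; rewrite !ffunE.
under eq_bigr do rewrite ffunE mulr_sumr.
under [RHS]eq_bigr do rewrite ffunE mulr_suml.
rewrite [RHS]exchange_big /=; apply: eq_bigr => k _.
rewrite [RHS](reindex_inj (mulgI k)) /=; apply: eq_bigr => m _.
by rewrite mulKg invMg mulgA mulrA.
Qed.

Lemma gmul1 : left_id (gone n) (@gmul n).
Proof.
move=> x; apply/ffunP=> g; rewrite ffunE (bigD1 1%g) //= big1 => [|h /negbTE h1].
  by rewrite !ffunE eqxx mul1r invg1 mul1g addr0.
by rewrite !ffunE h1 mul0r.
Qed.

Lemma gmulr1 : right_id (gone n) (@gmul n).
Proof.
move=> x; apply/ffunP=> g; rewrite ffunE (bigD1 g) //= big1 => [|h /negbTE hg].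
  by rewrite !ffunE mulVg eqxx mulr1 addr0.
rewrite !ffunE; case: eqP => [/eqP|]; last by rewrite mulr0.
by rewrite -eq_mulVg1 hg.
Qed.

Lemma gmulDl : left_distributive (@gmul n) +%R.
Proof.
move=> x y z; apply/ffunP=> g; rewrite !ffunE -big_split /=; apply: eq_bigr => h _.
by rewrite ffunE mulrDl.
Qed.

Lemma gmulDr : right_distributive (@gmul n) +%R.
Proof.
move=> x y z; apply/ffunP=> g; rewrite !ffunE -big_split /=; apply: eq_bigr => h _.
by rewrite ffunE mulrDr.
Qed.

Lemma gone_neq0 : gone n != 0.
Proof. by apply/eqP => /ffunP /(_ 1%g); rewrite !ffunE eqxx => /eqP; rewrite oner_eq0. Qed.

End Alg.

Definition galgR n : Type := galg n.
HB.instance Definition _ n := GRing.Zmodule.on (galgR n).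
HB.instance Definition _ n := GRing.Zmodule_isNzRing.Build (galgR n)
  (@gmulA n) (@gmul1 n) (@gmulr1 n) (@gmulDl n) (@gmulDr n) (@gone_neq0 n).

Section Ring.
Variable n : nat.
Local Notation R := (galgR n).

Lemma gbasisM (g h : 'S_n) : (gbasis g : R) * gbasis h = gbasis (g * h)%g.
Proof.
apply/ffunP=> k; rewrite !ffunE /= (bigD1 g) //= big1 => [|m /negbTE mg].
  rewrite !ffunE eqxx mul1r addr0; congr (_%:R).
  case: eqP => [<-|ne]; first by rewrite mulKVg eqxx.
  by case: eqP => // e; case: ne; rewrite e mulKg.
by rewrite !ffunE mg mul0r.
Qed.

Lemma gbasis1 : (gbasis 1 : R) = 1.
Proof. by []. Qed.

Lemma gscale_mull a (x y : R) : (gscale a x : R) * y = gscale a (x * y).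
Proof.
apply/ffunP=> g; rewrite !ffunE mulr_sumr; apply: eq_bigr => h _.
by rewrite ffunE mulrA.
Qed.

Lemma gscale_mulr a (x y : R) : x * (gscale a y : R) = gscale a (x * y).
Proof.
apply/ffunP=> g; rewrite !ffunE mulr_sumr; apply: eq_bigr => h _.
by rewrite ffunE mulrCA.
Qed.

Lemma goneE : (gone n : R) = 1. Proof. by []. Qed.

Definition sc (a : rat) : R := gscale a (gone n).

Lemma gscaleE a (x : R) : gscale a x = sc a * x.
Proof. by rewrite /sc gscale_mull goneE mul1r. Qed.

Lemma sc_central a (x : R) : GRing.comm (sc a) x.
Proof. by rewrite /GRing.comm /sc gscale_mull gscale_mulr goneE mul1r mulr1. Qed.

Lemma sc_is_zmod : zmod_morphism sc.
Proof. by move=> u v; apply/ffunP=> g; rewrite !ffunE mulrBl. Qed.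

Lemma sc_is_monoid : monoid_morphism sc.
Proof.
split; first by apply/ffunP=> g; rewrite !ffunE mul1r.
move=> u v; rewrite /sc gscale_mull goneE mul1r; apply/ffunP=> g.
by rewrite !ffunE mulrA.
Qed.

HB.instance Definition _ := GRing.isZmodMorphism.Build rat R sc sc_is_zmod.
HB.instance Definition _ := GRing.isMonoidMorphism.Build rat R sc sc_is_monoid.

Lemma sc_comm (u : R) : commr_rmorph sc u.
Proof. by move=> a; apply/commr_sym/sc_central. Qed.

Definition ev (u : R) (p : {poly rat}) : R := horner_morph (sc_comm u) p.

End Ring.

Section Comm.
Variable R : nzRingType.
Variables s x y : R.
Hypothesis cxy : GRing.comm x y.
Hypothesis se : GRing.comm s (x + y).
Hypothesis sq : GRing.comm s (x * y).

Lemma newton m : x ^+ m.+2 + y ^+ m.+2 =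
  (x + y) * (x ^+ m.+1 + y ^+ m.+1) - (x * y) * (x ^+ m + y ^+ m).
Proof.
have e1 : x * y * x ^+ m = y * x ^+ m.+1 by rewrite cxy -mulrA -exprS.
have e2 : x * y * y ^+ m = x * y ^+ m.+1 by rewrite -mulrA -exprS.
rewrite !mulrDl !mulrDr e1 e2 -!exprS.
by rewrite [y * _ + y ^+ _]addrC addrACA [x * y ^+ _ + _]addrC addrK.
Qed.

Lemma comm_pow_sum m : GRing.comm s (x ^+ m + y ^+ m).
Proof.
suff : GRing.comm s (x ^+ m + y ^+ m) /\ GRing.comm s (x ^+ m.+1 + y ^+ m.+1) by case.
elim: m => [|m [IH1 IH2]].
  by rewrite !expr0 !expr1; split=> //; apply: commrD; apply: commr1.
split=> //; rewrite newton; apply: commrB; apply: commrM => //.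
Qed.

Lemma comm_sym_mono i j : GRing.comm s (x ^+ i * y ^+ j + x ^+ j * y ^+ i).
Proof.
wlog lij : i j / (i <= j)%N.
  move=> H; case: (leqP i j) => [/H //|/ltnW /H]; by rewrite addrC.
rewrite -(subnKC lij); set d := (j - i)%N.
rewrite !exprD.
have cxd : GRing.comm (x ^+ d) (y ^+ i) by apply/commrX/commr_sym/commrX.
rewrite -[x ^+ i * x ^+ d * _]mulrA cxd !mulrA -mulrDr addrC.
rewrite -exprMn_comm //; apply: commrM; first exact: commrX.
exact: comm_pow_sum.
Qed.

End Comm.

Section Ev.
Variable n : nat.
Local Notation R := (galgR n).

Lemma ev_expand (u : R) (p : {poly rat}) N : (size p <= N)%N -> ev u p = \sum_(i < N) sc n (p`_i) * u ^+ i.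
Proof.
move=> hN; rewrite /ev /horner_morph (horner_coef_wide _ (leq_trans (size_poly _ _) hN)).
by apply: eq_bigr => i _; rewrite coef_map.
Qed.

Lemma scM2 a b (u v : R) : (sc n a * u) * (sc n b * v) = sc n (a * b) * (u * v).
Proof.
rewrite -mulrA [u * (sc n b * v)]mulrA -(sc_central b u) -mulrA mulrA.
by rewrite rmorphM.
Qed.

Lemma sym_ev (s x y : R) : GRing.comm x y -> GRing.comm s (x + y) -> GRing.comm s (x * y) ->
  forall f g, GRing.comm s (ev x f * ev y g + ev x g * ev y f).
Proof.
move=> cxy se sq f g; set N := (size f + size g)%N.
have hf : (size f <= N)%N by apply: leq_addr.
have hg : (size g <= N)%N by apply: leq_addl.
rewrite !(ev_expand _ hf) !(ev_expand _ hg) !mulr_suml.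
under eq_bigr do rewrite mulr_sumr.
under [X in _ + X]eq_bigr do rewrite mulr_sumr.
rewrite [X in _ + X]exchange_big /= -big_split; apply: commr_sum => i _.
rewrite -big_split; apply: commr_sum => j _ /=.
rewrite !scM2 [g`_j * _]mulrC -mulrDr; apply: commrM.
  exact/commr_sym/sc_central.
exact: comm_sym_mono.
Qed.

End Ev.

Section JMfacts.
Variable n : nat.
Local Notation R := (galgR n).
Definition gb (g : 'S_n) : R := gbasis g.
Definition LL (j : 'I_n) : R := JM j.

Lemma conjL (u v j : 'I_n) : u != j -> v != j -> (u < j)%N = (v < j)%N ->
  gb (tperm u v) * LL j = LL j * gb (tperm u v).
Proof.
move=> uj vj uvj; rewrite /LL /JM mulr_sumr mulr_suml.
under eq_bigr do rewrite /gb gbasisM.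
under [RHS]eq_bigr do rewrite gbasisM conjgC tpermJ (tpermD uj vj).
rewrite (reindex_inj (@perm_inj _ (tperm u v))) /=; apply: eq_bigl => i.
by case: tpermP => [->|->|//]; rewrite uvj.
Qed.

Lemma LL_comm (i j : 'I_n) : GRing.comm (LL i) (LL j).
Proof.
wlog lij : i j / (i <= j)%N.
  move=> H; case: (leqP i j) => [/H //|/ltnW /H]; exact: commr_sym.
case: (ltngtP i j) lij => // [ltij _|/val_inj -> _]; last by [].
rewrite {1}/LL /JM; apply/commr_sym/commr_sum => l lti.
apply/esym/conjL; rewrite ?ltij ?(ltn_trans lti ltij) //.
  by rewrite neq_ltn (ltn_trans lti ltij).
by rewrite neq_ltn ltij.
Qed.

End JMfacts.

Section Sigma.
Variable n : nat.
Local Notation R := (galgR n).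
Variables a b : 'I_n.
Hypothesis hab : val b = (val a).+1.
Local Notation sg := (gb (tperm a b)).

Lemma a_neq_b : a != b.
Proof. by rewrite -(inj_eq val_inj) hab neq_ltn ltnSn. Qed.

Lemma sg2 : sg * sg = 1.
Proof. by rewrite /gb gbasisM tperm2. Qed.

Lemma sg_other (i : 'I_n) : i != a -> i != b -> GRing.comm sg (LL i).
Proof.
move=> ia ib; apply: conjL; rewrite 1?eq_sym //.
have hab' : nat_of_ord b = (nat_of_ord a).+1 := hab.
have ia' : nat_of_ord i != nat_of_ord a by [].
have ib' : nat_of_ord i != nat_of_ord b by [].
by apply/idP/idP => h; lia.
Qed.

Lemma LLb_eq : LL b = sg * LL a * sg + sg.
Proof.
have hab' : nat_of_ord b = (nat_of_ord a).+1 := hab.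
rewrite /LL /JM mulr_sumr mulr_suml.
have ltab : (a < b)%N by rewrite hab'.
rewrite (bigD1 a) //= addrC; congr (_ + _).
  apply: eq_big => l.
    apply/idP/idP => [/andP[h1 h2]|h]; last first.
      by apply/andP; split; [lia | rewrite -(inj_eq val_inj) /=; lia].
    by move: h2; rewrite -(inj_eq val_inj) /= => h2; lia.
  move=> hl; rewrite /gb !gbasisM -mulgA -{1}(tpermV a b) -conjgE tpermJ tpermL.
  move: hl => /andP[h1]; rewrite -(inj_eq val_inj) /= => h2.
  rewrite tpermD // -(inj_eq val_inj) /=; lia.
Qed.

Lemma sgLb : sg * LL b = LL a * sg + 1.
Proof. by rewrite LLb_eq mulrDr !mulrA sg2 mul1r. Qed.

Lemma Lbsg : LL b * sg = sg * LL a + 1.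
Proof. by rewrite LLb_eq mulrDl -!mulrA sg2 mulr1. Qed.

Lemma sgLa : sg * LL a = LL b * sg - 1.
Proof. by rewrite Lbsg addrK. Qed.

Lemma sg_sum : GRing.comm sg (LL a + LL b).
Proof.
rewrite /GRing.comm mulrDr mulrDl sgLa sgLb.
by rewrite addrC addrACA subrr addr0.
Qed.

Lemma sg_prod : GRing.comm sg (LL a * LL b).
Proof.
rewrite /GRing.comm mulrA sgLa mulrBl -[LL b * sg * LL b]mulrA sgLb mulrDr mulr1 mul1r addrK mulrA.
by rewrite (LL_comm b a).
Qed.

End Sigma.

Section Reorder.
Variable R : nzRingType.

Lemma prod_split_comm (I : Type) (r : seq I) (u v : I -> R) :
  (forall i j, GRing.comm (u i) (v j)) ->
  \prod_(i <- r) (u i * v i) = \prod_(i <- r) u i * \prod_(i <- r) v i.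
Proof.
move=> cuv; elim: r => [|x r IH]; first by rewrite !big_nil mulr1.
rewrite !big_cons IH !mulrA; congr (_ * _); rewrite -!mulrA; congr (_ * _).
by apply: commr_prod => i _; apply: commr_sym; apply: cuv.
Qed.

Lemma exchange_comm (I J : Type) (rI : seq I) (rJ : seq J) (P : I -> J -> bool)
    (F : I -> J -> R) :
  (forall i j i' j', GRing.comm (F i j) (F i' j')) ->
  \prod_(i <- rI) \prod_(j <- rJ | P i j) F i j =
  \prod_(j <- rJ) \prod_(i <- rI | P i j) F i j.
Proof.
move=> cF.
under eq_bigr do rewrite big_mkcond.
under [RHS]eq_bigr do rewrite big_mkcond.
set G := fun i j => if P i j then F i j else 1.
have cG : forall i j i' j', GRing.comm (G i j) (G i' j').
  move=> i j i' j'; rewrite /G; case: (P i j); case: (P i' j');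
  by [apply: cF | apply: commr1 | apply: commr_sym; apply: commr1].
rewrite -/G.
elim: rI => [|x r IH].
  by rewrite big_nil big1 // => j _; rewrite big_nil.
rewrite big_cons IH -prod_split_comm.
  by apply: eq_bigr => j _; rewrite big_cons.
by move=> j j'; apply: commr_prod => i _; apply: cG.
Qed.

End Reorder.

Section Kappa.
Variable n : nat.
Local Notation R := (galgR n).

Definition Fk (j : 'I_n) (g c : int) : R := sc n ((g - c)%:~R)^-1 * (LL j - sc n (c%:~R)).
Definition kap (j : 'I_n) (g : int) : R :=
  \prod_(c <- contents_range n | g != c) Fk j g c.

Lemma Fk_commL j g c i : GRing.comm (Fk j g c) (LL i).
Proof.
apply: commr_sym; apply: commrM; first exact/commr_sym/sc_central.
apply: commrB; first exact: LL_comm.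
exact/commr_sym/sc_central.
Qed.

Lemma comm_of_L (z : R) j g c : (forall i, GRing.comm z (LL i)) -> GRing.comm z (Fk j g c).
Proof.
move=> h; apply: commrM; first exact/commr_sym/sc_central.
apply: commrB; first exact: h.
exact/commr_sym/sc_central.
Qed.

Lemma kap_commL j g i : GRing.comm (kap j g) (LL i).
Proof.
apply: commr_sym; apply: commr_prod => c _; apply: commr_sym; exact: Fk_commL.
Qed.

Lemma comm_of_L_kap (z : R) j g : (forall i, GRing.comm z (LL i)) -> GRing.comm z (kap j g).
Proof. by move=> h; apply: commr_prod => c _; apply: comm_of_L. Qed.

Lemma Fk_comm j g c j' g' c' : GRing.comm (Fk j g c) (Fk j' g' c').
Proof. by apply: comm_of_L => i; apply: Fk_commL. Qed.

Lemma kap_comm j g j' g' : GRing.comm (kap j g) (kap j' g').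
Proof. by apply: comm_of_L_kap => i; apply: kap_commL. Qed.

Lemma gprodE (l : seq (galg n)) : (gprod l : R) = \prod_(x <- l) (x : R).
Proof. by elim: l => [|x l IH] /=; rewrite ?big_nil ?big_cons // IH. Qed.

Lemma FkE j g c : Fk j g c = gscale ((g - c)%:~R)^-1 (JM j - gscale (c%:~R) (gone n)).
Proof. by rewrite /Fk !gscaleE goneE mulr1. Qed.

Lemma JMidemE (s : tab n) : (JMidem s : R) = \prod_(i <- enum 'I_n) kap i (content s i).
Proof.
rewrite /JMidem gprodE big_flatten /= big_map.
under eq_bigr do rewrite big_map big_filter.
under eq_bigr do under eq_bigr do rewrite -FkE.
rewrite (@exchange_comm _ _ _ (contents_range n) (enum 'I_n) (fun c i => content s i != c)
          (fun c i => Fk i (content s i) c)); last first.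
  by move=> *; apply: Fk_comm.
by [].
Qed.

End Kappa.

Section Split.
Variable n : nat.
Local Notation R := (galgR n).
Variables a b : 'I_n.
Hypothesis hab : val b = (val a).+1.

Definition Mo (s : tab n) : R :=
  \prod_(i <- enum 'I_n | (i != a) && (i != b)) kap i (content s i).

Lemma prod_pick (K : 'I_n -> R) (x : 'I_n) :
  \prod_(i <- enum 'I_n) (if i == x then K i else 1) = K x.
Proof.
rewrite -big_mkcond -big_filter.
have -> : [seq i <- enum 'I_n | i == x] = [:: x].
  by apply: filter_pred1_uniq; rewrite ?enum_uniq ?mem_enum.
by rewrite big_seq1.
Qed.

Lemma JMidem_split (s : tab n) :
  (JMidem s : R) = Mo s * (kap a (content s a) * kap b (content s b)).
Proof.
have nab := a_neq_b hab.
set K := fun i => kap i (content s i).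
rewrite JMidemE /Mo.
rewrite -[kap a _](prod_pick K a) -[kap b _](prod_pick K b) -prod_split_comm; last first.
  by move=> i j; do 2 case: (_ == _); rewrite /GRing.comm ?mul1r ?mulr1 //; apply: kap_comm.
rewrite [\prod_(i <- enum 'I_n | (i != a) && (i != b)) _]big_mkcond -prod_split_comm; last first.
  move=> i j; case: (_ && _); last by rewrite /GRing.comm mul1r mulr1.
  by apply: commrM; do 1?case: (_ == _); rewrite /GRing.comm ?mul1r ?mulr1 //; apply: kap_comm.
apply: eq_bigr => i _.
have [->|ia] := eqVneq i a; first by rewrite (negbTE nab) /= mul1r mulr1.
have [->|ib] := eqVneq i b; first by rewrite /= !mul1r.
by rewrite /= !mulr1.
Qed.

End Split.

Section Pair.
Variable n : nat.
Local Notation R := (galgR n).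
Variables a b : 'I_n.
Hypothesis hab : val b = (val a).+1.
Local Notation sg := (gb (tperm a b)).

Definition ell (g : int) : {poly rat} :=
  \prod_(c <- contents_range n | g != c) ((((g - c)%:~R)^-1)%:P * ('X - (c%:~R)%:P)).

Lemma kap_ev j g : kap j g = @ev n (LL j) (ell g).
Proof.
rewrite /ev /ell rmorph_prod; apply: eq_bigr => c _.
rewrite /Fk rmorphM !rmorphB /= horner_morphX !horner_morphC.
by [].
Qed.

Lemma content_tact (s : tab n) i : content (tact s (tperm a b)) i = content s (tperm a b i).
Proof. by rewrite /content /trow /tcol ffunE tpermV. Qed.

Lemma Mo_tact (s : tab n) : Mo a b (tact s (tperm a b)) = Mo a b s.
Proof.
rewrite /Mo; apply: eq_bigr => i /andP[ia ib].
by rewrite content_tact tpermD // eq_sym.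
Qed.

Lemma sg_Mo (s : tab n) : GRing.comm sg (Mo a b s).
Proof.
apply: commr_prod => i /andP[ia ib]; apply: commr_prod => c _.
apply: commrM; first exact/commr_sym/sc_central.
apply: commrB; first exact: sg_other.
exact/commr_sym/sc_central.
Qed.

Lemma sg_pair (s : tab n) : GRing.comm sg ((JMidem s : R) + JMidem (tact s (tperm a b))).
Proof.
rewrite !(JMidem_split hab) Mo_tact !content_tact tpermL tpermR -mulrDr.
apply: commrM; first exact: sg_Mo.
rewrite !kap_ev; apply: sym_ev.
- exact: LL_comm.
- exact: sg_sum.
- exact: sg_prod.
Qed.

End Pair.

Lemma not_mod1 (p : nat) (u : int) : prime p -> (u == u + 1 %[mod p%:Z])%Z = false.
Proof.
move=> pp; rewrite -[X in (X %% _)%Z == _]addr0 eqz_modDl mod0z modz_small //.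
by rewrite /= ltz_nat prime_gt1.
Qed.

Section Comb.
Variable n : nat.
Variables a b : 'I_n.
Hypothesis hab : val b = (val a).+1.
Local Notation sg := (tperm a b).

Lemma tact_inv (s : tab n) : tact (tact s sg) sg = s.
Proof. by apply/ffunP => i; rewrite !ffunE tpermV tpermK. Qed.

Lemma tableau_tact (s : tab n) (g : 'S_n) : is_tableau s -> is_tableau (tact s g).
Proof.
move=> /andP[/injectiveP inj /forallP hs]; apply/andP; split.
  by apply/injectiveP => x y; rewrite !ffunE => /inj /perm_inj.
apply/forallP => x; apply/forallP => i; apply/forallP => j; apply/implyP => hij.
have := hs (g^-1 x)%g => /forallP /(_ i) /forallP /(_ j) /implyP.
rewrite /trow /tcol in hij *; rewrite ffunE in hij.
move=> /(_ hij) /existsP [y /eqP hy]; apply/existsP; exists (g y).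
by rewrite ffunE permK hy.
Qed.

Lemma sigma_order (x y : 'I_n) : (sg x < sg y)%N ->
  (x < y)%N || ((nat_of_ord x == nat_of_ord b) && (nat_of_ord y == nat_of_ord a)).
Proof.
have hab' : nat_of_ord b = (nat_of_ord a).+1 := hab.
have E : forall z, nat_of_ord (sg z) = if nat_of_ord z == a then nat_of_ord b
                    else if nat_of_ord z == b then nat_of_ord a else nat_of_ord z.
  move=> z; case: tpermP => [->|->|h1 h2]; rewrite ?eqxx //.
    by rewrite hab' (gtn_eqF (ltnSn _)).
  have -> : (nat_of_ord z == a) = false by apply/eqP => /val_inj.
  have -> : (nat_of_ord z == b) = false by apply/eqP => /val_inj.
  by [].
rewrite !E; case: (@eqP nat x a); case: (@eqP nat x b); case: (@eqP nat y a);
  case: (@eqP nat y b); move=> *; lia.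
Qed.

Lemma standard_tact (p : nat) (s : tab n) : prime p -> standard s ->
  (content s a == content s b %[mod p%:Z])%Z -> standard (tact s sg).
Proof.
move=> pp /andP[ts /forallP hs] cab; apply/andP; split; first exact: tableau_tact.
have swap : forall x y : 'I_n, (nat_of_ord x == b) && (nat_of_ord y == a) ->
    sg x = a /\ sg y = b.
  move=> x y /andP[/eqP/val_inj -> /eqP/val_inj ->]; by rewrite tpermL tpermR.
apply/forallP => x; apply/forallP => y.
have /forallP /(_ (sg y)) /andP[h1 h2] := hs (sg x).
rewrite /trow /tcol !ffunE tpermV.
rewrite /trow /tcol in h1 h2.
apply/andP; split; apply/implyP => hc.
- have /orP [//|/swap [ex ey]] := sigma_order (implyP h1 hc).
  exfalso; move: hc; rewrite ex ey => /andP [/eqP r1 /eqP c1].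
  have : content s b = content s a + 1.
    by rewrite /content /trow /tcol r1 c1; lia.
  by move=> e; move: cab; rewrite e not_mod1.
- have /orP [//|/swap [ex ey]] := sigma_order (implyP h2 hc).
  exfalso; move: hc; rewrite ex ey => /andP [/eqP c1 /eqP r1].
  have : content s a = content s b + 1.
    by rewrite /content /trow /tcol r1 c1; lia.
  by move=> e; move: cab; rewrite e eq_sym not_mod1.
Qed.

Lemma psim_tact (p : nat) (s t : tab n) :
  (content t a == content t b %[mod p%:Z])%Z ->
  psim p s t -> psim p (tact s sg) t.
Proof.
move=> ct /forallP hs; apply/forallP => x.
have e : forall y, content (tact s sg) y = content s (sg y).
  by move=> y; rewrite /content /trow /tcol ffunE tpermV.
rewrite e; move/eqP: (hs (sg x)) => ->.
case: tpermP => [->|->|//]; by rewrite ?(eqP ct) // eq_sym.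
Qed.

End Comb.

Lemma mulr2n_inj n (x y : galgR n) : x *+ 2 = y *+ 2 -> x = y.
Proof.
move=> h; apply/ffunP => g; have := congr1 (fun f : galgR n => f g) h.
rewrite /= !ffunMnE => /eqP; rewrite -subr_eq0 -mulrnBl mulrn_eq0 /= subr_eq0 => /eqP.
by [].
Qed.

Unset Implicit Arguments.
Theorem mainTheorem1 (p n : nat) (t : tab n) (a b : 'I_n) :
  prime p ->
  standard t ->
  val b = (val a).+1 ->
  standard (tact t (tperm a b)) ->
  (content t a == content t b %[mod p%:Z])%Z ->
  gmul (gbasis (tperm a b)) (JMclass p t) = gmul (JMclass p t) (gbasis (tperm a b)).
Proof.
move=> pp st hab _ cab.
pose J : galgR n := JMclass p t.
pose P := fun s : tab n => standard s && psim p s t.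
have fwd : forall s, P s -> P (tact s (tperm a b)).
  move=> s /andP[ss ps]; apply/andP; split; last exact: psim_tact.
  apply: (standard_tact hab pp ss).
  move/forallP: (ps) => hps.
  by rewrite (eqP (hps a)) (eqP (hps b)).
have key : forall s, P (tact s (tperm a b)) = P s.
  move=> s; apply/idP/idP => [h|]; last exact: fwd.
  by rewrite -(tact_inv a b s); apply: fwd.
have E2 : \sum_(s | P s) (JMidem (tact s (tperm a b)) : galgR n) = J.
  rewrite /J /JMclass [RHS](reindex_inj (@can_inj _ _ (fun s : tab n => tact s (tperm a b)) (fun s => tact s (tperm a b)) (tact_inv a b))) /=.
  by apply: eq_bigl => s; rewrite -/(P _) key.
have cJ : GRing.comm (gb (tperm a b)) (J + J).
  rewrite -{2}E2 /J /JMclass -big_split /=; apply: commr_sum => s _.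
  exact: sg_pair.
change (gb (tperm a b) * J = J * gb (tperm a b)).
apply: mulr2n_inj; by rewrite -mulrnAr -mulrnAl mulr2n.
Qed.
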